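(* Let $F=A^\sharp\circ B\circ P$, i.e. $F(x)=A^\sharp(B\odot(Px))$ for $x\in\mathbb{T}^n$, where $A\in\mathbb{T}^{m\times n}$ has at least one finite entry per column, $B\in\mathbb{T}^{m\times q}$ has at least one finite entry per row, the finite entries of $A$ and $B$ are integers, and $P\in\mathbb{R}^{q\times n}$ is row-stochastic with $P_{il}=Q_{il}/M$ for integers $Q_{il}$ and a positive integer $M$. Suppose that $F$ has a bias vector and that $\rho(F)\ne0$. Let $k$ be the number of nondeterministic states. Then $\operatorname{cond}(F)=|\rho(F)|^{-1}\le nM^{\min\{k,n-1\}}$.
   Context: $\mathbb{T}=\mathbb{R}\cup\{-\infty\}$. For $C\in\mathbb{T}^{r\times s}$, $z\in\mathbb{T}^s$: $(C\odot z)_i=\max_j(C_{ij}+z_j)$; the adjoint is $C^\sharp(y)_j=\min_i(-C_{ij}+y_i)$, with $(+\infty)+(-\infty)=+\infty$. $Pz$ is the usual matrix-vector product with $0\cdot(-\infty)=0$. Row-stochastic: nonnegative entries, rows summing to $1$. A state $i\in\{1,\dots,q\}$ is nondeterministic if there are at least two indices $l\ne l'$ in $\{1,\dots,n\}$ with $P_{il}>0$ and $P_{il'}>0$. A bias vector is $v\in\mathbb{R}^n$ with $F(v)=\lambda+v$ for some $\lambda\in\mathbb{R}$ (entrywise addition); this $\lambda$ is unique and is the ergodic constant $\rho(F)$. $\operatorname{cond}(F)$ denotes $|\rho(F)|^{-1}$. *)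

(* Defs.v *)
From Stdlib Require Import Reals Lra Lia ZArith Arith List.
Import ListNotations.
Open Scope R_scope.

(* The tropical semiring T = R ∪ {-oo}: None stands for -oo. *)
Definition trop := option R.

(* Extended reals R ∪ {-oo, +oo}, used for values of the adjoint A^#. *)
Inductive ext : Type := NInf | Fin (r : R) | PInf.

Definition tadd (a b : trop) : trop :=
  match a, b with Some x, Some y => Some (x + y) | _, _ => None end.

Definition tmax (a b : trop) : trop :=
  match a, b with
  | None, _ => b
  | _, None => a
  | Some x, Some y => Some (Rmax x y)
  end.

Definition emin (a b : ext) : ext :=
  match a, b with
  | PInf, _ => b
  | _, PInf => a
  | NInf, _ => NInf
  | _, NInf => NInf
  | Fin x, Fin y => Fin (Rmin x y)
  end.

(* Matrices are functions nat -> nat -> _, vectors nat -> _, with the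
   relevant dimensions passed explicitly; only indices below the
   dimensions are used. *)

Definition mp_app (C : nat -> nat -> trop) (s : nat) (z : nat -> trop)
  : nat -> trop :=
  fun i => fold_right (fun j acc => tmax (tadd (C i j) (z j)) acc) None (seq 0 s).

(* C^#(y)_j = min_{i<r} (-C_ij + y_i), with (+oo) + (-oo) = +oo *)
Definition sharp_term (c : trop) (y : trop) : ext :=
  match c with
  | None => PInf
  | Some c' => match y with None => NInf | Some y' => Fin (- c' + y') end
  end.

Definition sharp (C : nat -> nat -> trop) (r : nat) (y : nat -> trop)
  : nat -> ext :=
  fun j => fold_right (fun i acc => emin (sharp_term (C i j) (y i)) acc) PInf (seq 0 r).

(* (P z)_i = sum_{l<n} P_il z_l, ordinary product with 0 * (-oo) = 0 *)
Definition pm_term (p : R) (x : trop) : trop :=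
  if Req_EM_T p 0 then Some 0
  else match x with None => None | Some x' => Some (p * x') end.

Definition pmul (P : nat -> nat -> R) (n : nat) (x : nat -> trop) : nat -> trop :=
  fun i => fold_right (fun l acc => tadd (pm_term (P i l) (x l)) acc) (Some 0) (seq 0 n).

(* F = A^# ∘ B ∘ P, with A : m×n, B : m×q, P : q×n *)
Definition Fop (A B : nat -> nat -> trop) (P : nat -> nat -> R)
  (m n q : nat) (x : nat -> trop) : nat -> ext :=
  sharp A m (mp_app B q (pmul P n x)).

Definition row_sum (P : nat -> nat -> R) (n : nat) (i : nat) : R :=
  fold_right Rplus 0 (map (P i) (seq 0 n)).

Definition row_stochastic (P : nat -> nat -> R) (q n : nat) : Prop :=
  (forall i l, (i < q)%nat -> (l < n)%nat -> 0 <= P i l) /\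
  (forall i, (i < q)%nat -> row_sum P n i = 1).

Definition nondeterministic (P : nat -> nat -> R) (n i : nat) : Prop :=
  exists l l', (l < n)%nat /\ (l' < n)%nat /\ l <> l' /\ 0 < P i l /\ 0 < P i l'.

Definition npos_row (P : nat -> nat -> R) (n i : nat) : nat :=
  length (filter (fun l => if Rlt_dec 0 (P i l) then true else false) (seq 0 n)).

Definition num_nondet (P : nat -> nat -> R) (q n : nat) : nat :=
  length (filter (fun i => Nat.leb 2 (npos_row P n i)) (seq 0 q)).

Definition is_bias (A B : nat -> nat -> trop) (P : nat -> nat -> R)
  (m n q : nat) (v : nat -> R) (lam : R) : Prop :=
  forall j, (j < n)%nat -> Fop A B P m n q (fun l => Some (v l)) j = Fin (lam + v j).

(* Main.v *)
Require Import Defs.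
From Stdlib Require Import Reals ZArith Arith List.
Open Scope R_scope.

Module Aux.
From Stdlib Require Import Lra Lia IndefiniteDescription.
From mathcomp Require Import all_boot all_algebra.
From mathcomp Require Import Rstruct.
From mathcomp Require Import zify.
Set Implicit Arguments. Unset Strict Implicit. Unset Printing Implicit Defensive.
Import GRing.Theory Num.Theory.
Local Close Scope R_scope.
Local Open Scope nat_scope.

Definition upd (V : finType) (g : {ffun V -> V}) (r x : V) : {ffun V -> V} :=
  [ffun i => if i == r then x else g i].

Lemma fconnect_agree (V : finType) (f1 f2 : V -> V) (r i : V) :
  (forall x, x != r -> f1 x = f2 x) -> fconnect f1 i r -> fconnect f2 i r.
Proof.
move=> hf /iter_findex hit.
have ex : exists t, iter t f1 i == r by exists (findex f1 i r); rewrite hit.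
case: (ex_minnP ex) => t /eqP ht tmin.
suff: forall s, s <= t -> iter s f1 i = iter s f2 i.
  by move/(_ t (leqnn t)); rewrite ht => ->; apply: fconnect_iter.
elim=> [|s IH] hs //=.
rewrite IH ?(ltnW hs) // hf // -IH ?(ltnW hs) //.
apply/negP=> /eqP e; have := tmin s; rewrite e eqxx => /(_ isT).
by rewrite leqNgt hs.
Qed.

Lemma fconnect_upd (V : finType) (g : {ffun V -> V}) r i :
  fconnect (upd g r r) i r = fconnect g i r.
Proof.
apply/idP/idP; apply: fconnect_agree => x hx; rewrite /upd ffunE (negbTE hx) //.
Qed.

Lemma iter_cycle_inj (V : finType) (g : V -> V) r1 r2 :
  fconnect g r1 r2 -> fconnect g r2 r1 -> g r1 = g r2 -> r1 = r2.
Proof.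
move=> /iter_findex h12 /iter_findex h21 e.
set a := findex g r1 r2 in h12; set b := findex g r2 r1 in h21.
have hp : iter (b + a) g r1 = r1 by rewrite iterD h12 h21.
case: (posnP (b + a)) => [p0|ppos].
  by move/eqP: p0; rewrite addn_eq0 => /andP[_ /eqP a0]; rewrite -h12 a0.
have : iter (b + a).-1 g (g r1) = r1 by rewrite -iterSr prednK.
rewrite e -h12 -iterSr -iterD prednK // addnC iterD hp => ->.
by [].
Qed.

Lemma count_roots (V : finType) (g : {ffun V -> V}) (l : V) :
  \sum_(r : V) ([forall i, fconnect g i r] && (g r == l) : nat)
  = [forall i, fconnect g i l].
Proof.
case: (boolP [forall i, fconnect g i l]) => [/forallP hall|hn].
- have /iter_findex hl := hall (g l).
  set a := findex g (g l) l in hl.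
  set r := iter a g l.
  have hr : g r = l by rewrite /r -iterS iterSr hl.
  have hrall : forall i, fconnect g i r.
    by move=> i; apply: connect_trans (hall i) _; apply: fconnect_iter.
  rewrite (bigD1 r) //=.
  rewrite (_ : [forall i, fconnect g i r] && (g r == l) = true); last first.
    by apply/andP; split; [apply/forallP|rewrite hr].
  rewrite big1 // => r' hne; apply/eqP; rewrite eqb0; apply/negP => /andP [/forallP h1 /eqP h2].
  move/negP: hne; apply; apply/eqP.
  apply: iter_cycle_inj; [exact: hrall|exact: h1|by rewrite h2 hr].
- rewrite big1 // => r _; apply/eqP; rewrite eqb0; apply/negP => /andP [/forallP h1 /eqP h2].
  move/negP: hn; apply; apply/forallP => i.
  by apply: connect_trans (h1 i) _; rewrite -h2; apply: fconnect1.
Qed.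

Definition arb (V : finType) (f : {ffun V -> V}) r := (f r == r) && [forall i, fconnect f i r].
Definition ytree (V : finType) (T : V -> V -> nat) (r : V) :=
  \sum_(f : {ffun V -> V} | arb f r) \prod_(i | i != r) T i (f i).
Definition dsum (V : finType) (T : V -> V -> nat) (i : V) := \sum_(l : V) T i l.

Lemma reidx (V : finType) (T : V -> V -> nat) r x :
  \sum_(f : {ffun V -> V} | arb f r) (\prod_(i | i != r) T i (f i)) * T r x
  = \sum_(g : {ffun V -> V} | [forall i, fconnect g i r] && (g r == x)) \prod_i T i (g i).
Proof.
rewrite (reindex_onto (fun g => upd g r r) (fun f => upd f r x)); last first.
  move=> f /andP [/eqP fr _]; apply/ffunP => i; rewrite !ffunE.
  by case: eqP => // ->; rewrite fr.
apply: eq_big => g.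
  rewrite /arb (_ : upd g r r r = r) ?ffunE ?eqxx //=.
  have -> : [forall i, fconnect (upd g r r) i r] = [forall i, fconnect g i r].
    by apply: eq_forallb => i; rewrite fconnect_upd.
  congr andb; apply/eqP/eqP.
    by move=> gr; move/ffunP: gr => /(_ r); rewrite !ffunE eqxx.
  by move=> e; apply/ffunP => i; rewrite !ffunE; case: eqP => // ->.
move=> /andP [_ /eqP <-].
rewrite [in RHS](bigD1 r) //= mulnC ffunE eqxx; congr (_ * _).
by apply: eq_bigr => i hi; rewrite /upd !ffunE (negbTE hi).
Qed.

Lemma sum_fiber (V : finType) (A : pred {ffun V -> V}) (W : {ffun V -> V} -> nat) l :
  \sum_(x : V) \sum_(g | A g && (g l == x)) W g = \sum_(g | A g) W g.
Proof.
rewrite (exchange_big_dep A) /=; last by move=> x g _ /andP[].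
apply: eq_bigr => g Ag.
by rewrite (big_pred1 (g l)) // => x /=; rewrite Ag eq_sym.
Qed.

Lemma sum_fiber2 (V : finType) (A : V -> pred {ffun V -> V}) (W : {ffun V -> V} -> nat) :
  \sum_(r : V) \sum_(g | A r g) W g = \sum_g (\sum_r (A r g : nat)) * W g.
Proof.
rewrite (exchange_big_dep predT) //=; apply: eq_bigr => g _.
by rewrite big_distrl /= big_mkcond /=; apply: eq_bigr => r _; case: (A r g); rewrite ?mul1n ?mul0n.
Qed.

Lemma ytree_stat (V : finType) (T : V -> V -> nat) l :
  \sum_(r : V) ytree T r * T r l = ytree T l * dsum T l.
Proof.
transitivity (\sum_(r : V) \sum_(g : {ffun V -> V} | [forall i, fconnect g i r] && (g r == l)) \prod_i T i (g i)).
  by apply: eq_bigr => r _; rewrite /ytree big_distrl /= reidx.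
rewrite sum_fiber2.
transitivity (\sum_(x : V) \sum_(g : {ffun V -> V} | [forall i, fconnect g i l] && (g l == x)) \prod_i T i (g i)); last first.
  rewrite /dsum big_distrr /=; apply: eq_bigr => x _.
  by rewrite /ytree big_distrl /= reidx.
rewrite sum_fiber [in RHS]big_mkcond /=; apply: eq_bigr => g _.
by rewrite count_roots; case: [forall i, _]; rewrite ?mul1n ?mul0n.
Qed.

Lemma leq_sum_sub (I : finType) (A B : pred I) (F : I -> nat) :
  (forall i, A i -> B i) -> \sum_(i | A i) F i <= \sum_(i | B i) F i.
Proof.
move=> AB; rewrite [X in _ <= X](bigID A) /=.
rewrite (eq_bigl A); first exact: leq_addr.
by move=> i; case Ai: (A i); rewrite ?andbT ?andbF ?AB.
Qed.

Lemma ytree_bound (V : finType) (T : V -> V -> nat) r :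
  ytree T r <= \prod_(i | i != r) dsum T i.
Proof.
rewrite /dsum (big_distr_big r) /=.
apply: leq_sum_sub => f /andP [/eqP fr _].
apply/familyP => i /=; case: ifP => //=.
by move/negbFE/eqP => ->; rewrite inE fr.
Qed.

Lemma ytree_pos (V : finType) (T : V -> V -> nat) r (g : {ffun V -> V}) :
  g r = r -> (forall i, fconnect g i r) -> (forall i, i != r -> 0 < T i (g i)) ->
  0 < ytree T r.
Proof.
move=> gr hc hp; rewrite /ytree (bigD1 g) /=; last first.
  by rewrite /arb gr eqxx /=; apply/forallP.
apply: ltn_addr; apply: prodn_cond_gt0 => i; exact: hp.
Qed.

Definition closedb (V : finType) (T : V -> V -> nat) (X : {set V}) :=
  [forall i in X, forall l, (0 < T i l) ==> (l \in X)].

Lemma grow (V : finType) (T : V -> V -> nat) (C : {set V}) r :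
  closedb T C -> r \in C ->
  (forall Y : {set V}, closedb T Y && (Y != set0) -> #|C| <= #|Y|) ->
  forall k, exists (X : {set V}) (g : V -> V) (h : V -> nat),
    [/\ r \in X, X \subset C, g r = r,
     (forall i, i \in X -> i != r -> [/\ g i \in X, h (g i) < h i & 0 < T i (g i)])
     & minn k #|C| <= #|X|].
Proof.
move=> Ccl rC Cmin; elim=> [|k [X [g [h [rX XC gr hX hk]]]]].
  exists [set r], id, (fun _ => 0); split => //.
  - by rewrite inE.
  - by rewrite sub1set.
  - by move=> i; rewrite inE => ->.
  - by rewrite min0n.
case: (leqP #|C| #|X|) => hCX.
  exists X, g, h; split => //; apply: leq_trans (geq_minr _ _) hCX.
case: (boolP [exists i in C :\: X, [exists l in X, 0 < T i l]]) => [hex|hnex].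
  case/exists_inP: hex => i; rewrite inE => /andP [iX iC] /exists_inP [l lX Til].
  exists (i |: X), (fun x => if x == i then l else g x),
         (fun x => if x == i then (h l).+1 else h x); split.
  - by rewrite inE rX orbT.
  - by rewrite subUset sub1set iC XC.
  - case: eqP => // ri; move: iX; by rewrite -ri rX.
  - move=> x; rewrite !inE => /orP [/eqP -> _|xX xr].
      have li : (l == i) = false by apply/negbTE; apply: contraNneq iX => <-.
      by rewrite eqxx li lX orbT; split.
    have xi : (x == i) = false by apply/negbTE; apply: contraNneq iX => <-.
    have [gX hlt Tp] := hX x xX xr.
    have gi : (g x == i) = false by apply/negbTE; apply: contraNneq iX => <-.
    by rewrite xi gi gX orbT; split.
  - rewrite cardsU1 (negbTE iX) add1n; lia.
exfalso.
have Ysub : C :\: X \subset C by apply: subsetDl.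
have Ycl : closedb T (C :\: X).
  apply/forall_inP => i; rewrite inE => /andP [iX iC]; apply/forallP => l; apply/implyP => Til.
  rewrite inE; apply/andP; split.
    apply/negP => lX; move/negP: hnex; apply; apply/exists_inP; exists i.
      by rewrite inE iX iC.
    by apply/exists_inP; exists l.
  by move/forall_inP: Ccl => /(_ i iC) /forallP /(_ l) /implyP; apply.
have Yne : C :\: X != set0.
  apply/negP => /eqP Y0; move: (cardsD C X); rewrite Y0 cards0.
  rewrite (setIidPr XC) => /esym/eqP; rewrite subn_eq0 => hle; lia.
have := Cmin _ (introT andP (conj Ycl Yne)).
rewrite cardsD (setIidPr XC).
have : 0 < #|X| by apply/card_gt0P; exists r.
lia.
Qed.

Lemma key (V : finType) (T : V -> V -> nat) (v0 : V) :
  (forall i, 0 < dsum T i) ->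
  exists y : V -> nat,
   [/\ exists r, 0 < y r,
       forall l, \sum_i y i * T i l = y l * dsum T l &
       forall r, y r <= \prod_(i | (0 < y i) && (i != r)) dsum T i].
Proof.
move=> dpos.
have PT : closedb T setT && (setT != set0 :> {set V}).
  apply/andP; split; first by apply/forall_inP => i _; apply/forallP => l; rewrite inE implybT.
  by apply/set0Pn; exists v0; rewrite inE.
case: (@arg_minnP _ setT (fun X : {set V} => closedb T X && (X != set0)) (fun X : {set V} => #|X|) PT) => C /andP [Ccl Cne] Cmin.
case/set0Pn: Cne => r rC.
have [X [g [h [rX XC gr hX hk]]]] := grow Ccl rC Cmin #|C|.
have XeC : X = C.
  apply/eqP; rewrite eqEsubset XC /=.
  rewrite minnn in hk; have := subset_leqif_card XC.
  by case=> le <-; rewrite eqn_leq le hk.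
subst X.
pose g0 : {ffun V -> V} := [ffun x => if x \in C then g x else r].
pose T' := fun i l => if i \in C then T i l else (l == r : nat).
have g0r : g0 r = r by rewrite ffunE rC gr.
have hconn : forall i, fconnect g0 i r.
  have hC : forall n i, i \in C -> h i <= n -> fconnect g0 i r.
    elim=> [|n IH] i iC hi.
      case: (eqVneq i r) => [->|ir]; first exact: connect0.
      by have [_ hlt _] := hX i iC ir; move: hlt; rewrite (leqNgt) in hi; lia.
    case: (eqVneq i r) => [->|ir]; first exact: connect0.
    have [gC hlt _] := hX i iC ir.
    apply: connect_trans (fconnect1 g0 i) _.
    rewrite ffunE iC; apply: IH gC _; lia.
  move=> i; case: (boolP (i \in C)) => iC; first exact: (hC (h i)).
  by apply: connect_trans (fconnect1 g0 i) _; rewrite ffunE (negbTE iC); apply: connect0.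
have dT' : forall i, dsum T' i = if i \in C then dsum T i else 1.
  move=> i; rewrite /dsum /T'; case: (i \in C) => //.
  by rewrite (bigD1 r) //= eqxx big1 // => l /negbTE ->.
pose y := ytree T'.
have stat' : forall l, \sum_i y i * T' i l = y l * dsum T' l := ytree_stat T'.
have ypos : 0 < y r.
  apply: (ytree_pos g0r hconn) => i ir; rewrite /T' ffunE.
  case: ifP => iC; last by rewrite iC eqxx.
  by rewrite iC; have [_ _ ->] := hX i iC ir.
have y0 : forall l, l \notin C -> y l = 0.
  move=> l lC; have := stat' l; rewrite dT' (negbTE lC) muln1 => <-.
  apply: big1 => i _; rewrite /T'; case: ifP => iC.
    case: (posnP (T i l)) => [-> |Tp]; first by rewrite muln0.
    by move/forall_inP: Ccl => /(_ i iC) /forallP /(_ l) /implyP /(_ Tp) lC'; rewrite lC' in lC.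
  have -> : (l == r) = false by apply/negbTE; apply: contraNneq lC => ->.
  by rewrite muln0.
have stat : forall l, \sum_i y i * T i l = y l * dsum T l.
  move=> l; have := stat' l; rewrite dT'.
  have -> : \sum_i y i * T' i l = \sum_i y i * T i l.
    apply: eq_bigr => i _; rewrite /T'; case: ifP => // /negbT iC; by rewrite y0.
  by case: ifP => // /negbT lC; rewrite y0 // !mul0n.
have suppC : forall i, (0 < y i) = (i \in C).
  pose D := [set i | 0 < y i].
  have DC : D \subset C.
    apply/subsetP => i; rewrite inE; apply: contraTT => iC; by rewrite y0.
  have Dcl : closedb T D && (D != set0).
    apply/andP; split; last by apply/set0Pn; exists r; rewrite inE.
    apply/forall_inP => i; rewrite inE => yi; apply/forallP => l; apply/implyP => Til.
    rewrite inE; have := stat l.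
    have : 0 < y i * T i l by rewrite muln_gt0 yi.
    move=> pos eq; have : 0 < y l * dsum T l.
      by rewrite -eq (bigD1 i) //=; apply: leq_trans pos (leq_addr _ _).
    by rewrite muln_gt0 => /andP[].
  have := Cmin _ Dcl; have := subset_leqif_card DC.
  case=> le eqv ge; have CD : C \subset D by rewrite -eqv eqn_leq le ge.
  move=> i; apply/idP/idP => [yi|iC].
    by apply: (subsetP DC); rewrite inE.
  by have := subsetP CD i iC; rewrite inE.
exists y; split => //; first by exists r.
move=> r'; apply: leq_trans (ytree_bound T' r') _.
rewrite [X in _ <= X](eq_bigl (fun i => (i \in C) && (i != r'))); last by move=> i; rewrite suppC.
rewrite [X in X <= _]big_mkcond [X in _ <= X]big_mkcond /=.
apply: leq_prod => i _; rewrite dT'; by case: (i \in C); case: (i != r').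
Qed.

Lemma seq_iota a b : List.seq a b = iota a b.
Proof. by elim: b a => //= b IH a; rewrite IH. Qed.

Lemma final_bound (lam : R) (S : nat) (z : Z) (Bd : R) :
  lam <> 0%R -> (0 < S)%nat -> Rmult lam (INR S) = IZR z -> Rle (INR S) Bd -> Rle (Rinv (Rabs lam)) Bd.
Proof.
move=> hl hS hz hB.
have Spos : Rlt 0 (INR S) by apply: lt_0_INR; apply/ltP.
have zn : z <> Z0.
  move=> z0; rewrite z0 in hz; case: (Rmult_integral _ _ hz) => // h0; lra.
have hz1 : Rle 1 (Rabs (IZR z)).
  rewrite -abs_IZR; apply: IZR_le; lia.
have la : Rlt 0 (Rabs lam) by apply: Rabs_pos_lt.
have : Rle 1 (Rmult (Rabs lam) (INR S)).
  by rewrite -(Rabs_pos_eq (INR S)) -?Rabs_mult ?hz //; apply: Rlt_le.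
move=> h1; apply: Rle_trans hB.
apply: (Rmult_le_reg_l (Rabs lam)) => //.
rewrite Rinv_r; [lra|lra].
Qed.



Local Open Scope ring_scope.

Lemma chain_sum (V : finType) (T : V -> V -> nat) (y : V -> nat) (lam : R) (u hh : V -> R) :
  (forall l, \sum_i y i * T i l = y l * dsum T l)%N ->
  (forall i, (dsum T i)%:R * (lam + u i) = hh i + \sum_l (T i l)%:R * u l) ->
  lam * \sum_i ((y i * dsum T i)%N%:R) = \sum_i (y i)%:R * hh i.
Proof.
move=> stat eq.
have E1 : \sum_i (y i)%:R * ((dsum T i)%:R * (lam + u i)) =
          \sum_i (y i)%:R * hh i + \sum_i (y i)%:R * \sum_l (T i l)%:R * u l.
  by rewrite -big_split /=; apply: eq_bigr => i _; rewrite eq mulrDr.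
have E2 : \sum_i (y i)%:R * \sum_l (T i l)%:R * u l = \sum_l ((y l * dsum T l)%N%:R * u l).
  rewrite (eq_bigr (fun i => \sum_l (y i)%:R * ((T i l)%:R * u l))); last by move=> i _; rewrite mulr_sumr.
  rewrite exchange_big /=; apply: eq_bigr => l _.
  by rewrite -stat natr_sum ?RmultE mulr_suml; apply: eq_bigr => i _; rewrite natrM mulrA.
have E3 : \sum_i (y i)%:R * ((dsum T i)%:R * (lam + u i)) =
   lam * \sum_i ((y i * dsum T i)%N%:R) + \sum_l ((y l * dsum T l)%N%:R * u l).
  rewrite mulr_sumr -big_split /=; apply: eq_bigr => i _; rewrite natrM mulrA mulrDr mulrC; congr (_ + _); rewrite mulrC.
by move: E1; rewrite E3 E2 => /addIr.
Qed.
Lemma fold_sum (F : nat -> R) s :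
  fold_right (fun l acc => Rplus (F l) acc) R0 s = \sum_(l <- s) F l.
Proof. by elim: s => [|a s IH] /=; rewrite ?big_nil ?big_cons ?IH. Qed.

Lemma rowsum_sum (P : nat -> nat -> R) n i :
  row_sum P n i = \sum_(l < n) P i l.
Proof.
rewrite /row_sum -(big_mkord (fun _ => true)) /index_iota subn0 -seq_iota.
by elim: (List.seq 0 n) => [|a s IH] /=; rewrite ?big_nil ?big_cons ?IH.
Qed.

Lemma pmul_val (P : nat -> nat -> R) n (v : nat -> R) i :
  pmul P n (fun l => Some (v l)) i = Some (\sum_(l < n) P i l * v l).
Proof.
have -> : \sum_(l < n) P i l * v l = \sum_(l <- iota 0 n) P i l * v l.
  by rewrite (_ : iota 0 n = index_iota 0 n) ?big_mkord // /index_iota subn0.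
rewrite /pmul -seq_iota.
elim: (List.seq 0 n) => [|a s IH] /=; rewrite ?big_nil ?big_cons ?IH //.
rewrite /pm_term; destruct (Req_dec_T (P i a) 0) as [e|ne]; simpl; last by [].
by rewrite e mul0r add0r RplusE add0r.
Qed.

Lemma emin_fold_attained (h : nat -> ext) s x :
  fold_right (fun i acc => emin (h i) acc) PInf s = Fin x -> exists i, In i s /\ h i = Fin x.
Proof.
elim: s => [|a s IH] //= e.
suff [H|H] : h a = Fin x \/ fold_right (fun i acc => emin (h i) acc) PInf s = Fin x.
- by exists a; split; [left|].
- by case: (IH H) => i [hi e']; exists i; split; [right|].
move: e; case: (h a) => [|r|]; case: (fold_right _ _ s) => [|r'|] //=;
  try (move=> ->; by [left|right]).
rewrite /Rmin; case: Rle_dec => _ [<-]; by [left|right].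
Qed.

Lemma tmax_fold_attained (h : nat -> trop) s x :
  fold_right (fun i acc => tmax (h i) acc) None s = Some x -> exists i, In i s /\ h i = Some x.
Proof.
elim: s => [|a s IH] //= e.
suff [H|H] : h a = Some x \/ fold_right (fun i acc => tmax (h i) acc) None s = Some x.
- by exists a; split; [left|].
- by case: (IH H) => i [hi e']; exists i; split; [right|].
move: e; case: (h a) => [r|]; case: (fold_right _ _ s) => [r'|] //=;
  try (move=> ->; by [left|right]).
rewrite /Rmax; case: Rle_dec => _ [<-]; by [left|right].
Qed.

Lemma bias_extract (m n q : nat) (A B : nat -> nat -> trop) (P : nat -> nat -> R)
  (v : nat -> R) (lam : R)
  (hA_int : forall i j a, (i < m)%coq_nat -> (j < n)%coq_nat -> A i j = Some a ->
              exists z : Z, a = IZR z)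
  (hB_int : forall i l b, (i < m)%coq_nat -> (l < q)%coq_nat -> B i l = Some b ->
              exists z : Z, b = IZR z)
  (hbias : is_bias A B P m n q v lam) :
  forall j, (j < n)%nat -> exists l (c : Z), (l < q)%nat /\
     lam + v j = IZR c + \sum_(k < n) P l k * v k.
Proof.
move=> j hj; have := hbias j (elimT ltP hj); rewrite /Fop /sharp.
move/emin_fold_attained => [i [/in_seq [_ him] hi]].
have him' : (i < m)%coq_nat by lia.
move: hi; rewrite /sharp_term.
case EA: (A i j) => [a'|] //.
case EY: (mp_app B q _ i) => [b|] // [hab].
move: EY; rewrite /mp_app => /tmax_fold_attained [l [/in_seq [_ hlq] hl]].
have hlq' : (l < q)%coq_nat by lia.
move: hl; rewrite pmul_val /tadd.
case EB: (B i l) => [b'|] // [hb].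
have [za ea] := hA_int _ _ _ him' (elimT ltP hj) EA.
have [zb eb] := hB_int _ _ _ him' hlq' EB.
exists l, (Z.sub zb za); split; first by apply/ltP.
move: hab hb; rewrite ?RplusE ?RoppE => hab hb.
rewrite minus_IZR RminusE -ea -eb -hab -hb.
by rewrite addrA [- a' + b']addrC.
Qed.

Lemma natr_IZR (k : nat) : (k%:R : R) = IZR (Z.of_nat k).
Proof. by rewrite -INRE INR_IZR_INZ. Qed.

Lemma sum_int (I : finType) (F : I -> R) :
  (forall i, exists z, F i = IZR z) -> exists z, \sum_i F i = IZR z.
Proof.
move=> hF; apply: (big_ind (fun x => exists z, x = IZR z)).
- by exists Z0.
- by move=> x y [a ->] [b ->]; exists (Z.add a b); rewrite plus_IZR.
- by move=> i _; apply: hF.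
Qed.

Lemma prod_cond_le (I : finType) (A : pred I) (d : I -> nat) :
  (forall i, 0 < d i)%N -> (\prod_(i | A i) d i <= \prod_i d i)%N.
Proof.
move=> dp; rewrite [X in (X <= _)%N]big_mkcond; apply: leq_prod => i _.
by case: (A i) => //; apply: dp.
Qed.

Lemma prod_count (s : seq nat) (p : pred nat) (M : nat) :
  (\prod_(i <- s) (if p i then M else 1) = M ^ count p s)%N.
Proof.
elim: s => [|a s IH]; first by rewrite big_nil.
by rewrite big_cons IH /=; case: (p a) => /=; rewrite ?add1n ?add0n ?expnS ?mul1n.
Qed.

Lemma count2 (s : seq nat) (f : pred nat) l l' :
  uniq s -> l \in s -> l' \in s -> l != l' -> f l -> f l' -> (2 <= count f s)%N.
Proof.
elim: s => [|a s IH] //= /andP [an us].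
rewrite !inE => hl hl' ne fl fl'.
case: (eqVneq l a) => [ela|nla].
  subst a; have l's : l' \in s by move: hl'; rewrite eq_sym (negbTE ne).
  rewrite fl add1n ltnS -has_count; apply/hasP; by exists l'.
case: (eqVneq l' a) => [el'a|nl'a].
  subst a; have ls : l \in s by move: hl; rewrite (negbTE nla).
  rewrite fl' add1n ltnS -has_count; apply/hasP; by exists l.
move: hl hl'; rewrite (negbTE nla) (negbTE nl'a) /= => ls l's.
by apply: leq_trans (IH us ls l's ne fl fl') (leq_addl _ _).
Qed.

Lemma length_filter_count (f : nat -> bool) (s : list nat) :
  length (List.filter f s) = count f s.
Proof. by elim: s => [|a s IH] //=; case: (f a) => /=; rewrite IH. Qed.

Lemma main_aux (m n q : nat) (A B : nat -> nat -> trop) (P : nat -> nat -> R)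
  (Q : nat -> nat -> Z) (M : nat)
  (hn : (0 < n)%coq_nat)
  (hA_int : forall i j a, (i < m)%coq_nat -> (j < n)%coq_nat -> A i j = Some a ->
              exists z : Z, a = IZR z)
  (hB_int : forall i l b, (i < m)%coq_nat -> (l < q)%coq_nat -> B i l = Some b ->
              exists z : Z, b = IZR z)
  (hP : row_stochastic P q n)
  (hM : (0 < M)%coq_nat)
  (hPQ : forall i l, (i < q)%coq_nat -> (l < n)%coq_nat -> P i l = Rdiv (IZR (Q i l)) (INR M))
  (v : nat -> R) (lam : R)
  (hbias : is_bias A B P m n q v lam)
  (hlam : lam <> R0) :
  Rle (Rinv (Rabs lam)) (Rmult (INR n) (pow (INR M) (Nat.min (num_nondet P q n) (Nat.sub n 1)))).
Proof.
have hex := bias_extract hA_int hB_int hbias.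
have hex' : forall j, exists p : nat * Z, (j < n)%N -> (p.1 < q)%N /\
     lam + v j = IZR p.2 + \sum_(k < n) P p.1 k * v k.
  move=> j; case: (ltnP j n) => hj.
    by have [l [c [hl e]]] := hex j hj; exists (l, c).
  by exists (0%N, Z0).
pose rc := fun j => proj1_sig (constructive_indefinite_description _ (hex' j)).
have hrc : forall j, (j < n)%N -> ((rc j).1 < q)%N /\
     lam + v j = IZR (rc j).2 + \sum_(k < n) P (rc j).1 k * v k.
  by move=> j; rewrite /rc; case: constructive_indefinite_description.
have hn' : (0 < n)%N by apply/ltP.
have hM' : (0 < M)%N by apply/ltP.
have hq : (0 < q)%N by have [h _] := hrc 0%N hn'; apply: leq_ltn_trans h.
pose rho (j : 'I_n) : 'I_q := Ordinal (proj1 (hrc j (ltn_ord j))).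
pose c (j : 'I_n) : Z := (rc j).2.
have heq : forall j : 'I_n, lam + v j = IZR (c j) + \sum_(k < n) P (rho j) k * v k.
  by move=> j; have [_ e] := hrc j (ltn_ord j).
case: hP => hP0 hP1.
have Pnn : forall (r : 'I_q) (l : 'I_n), (0 <= P r l).
  by move=> r l; apply/RleP; apply: hP0; apply/ltP.
have Psum : forall (r : 'I_q), \sum_(l < n) P r l = 1.
  by move=> r; rewrite -rowsum_sum; apply: hP1; apply/ltP.
pose Qn (r : 'I_q) (l : 'I_n) : nat := Z.to_nat (Q r l).
have MR : (M%:R : R) != 0 by rewrite pnatr_eq0 -lt0n.
have hQn : forall r l, (Qn r l)%:R = M%:R * P r l.
  move=> r l; rewrite hPQ; [|apply/ltP; exact: ltn_ord|apply/ltP; exact: ltn_ord].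
  have QP : Z.le Z0 (Q r l).
    have := Pnn r l; rewrite hPQ; [|apply/ltP; exact: ltn_ord|apply/ltP; exact: ltn_ord].
    move/RleP => h; apply: le_IZR.
    have hMpos : Rlt R0 (INR M) by apply: lt_0_INR.
    have e : IZR (Q r l) = Rmult (Rdiv (IZR (Q r l)) (INR M)) (INR M).
      field; lra.
    rewrite e; apply: Rmult_le_pos => //; lra.
  by rewrite natr_IZR /Qn Z2Nat.id // RdivE -INRE mulrC -mulrA mulVf ?mulr1 // INRE.
have INRpow : forall a b kk : nat, INR (a * b ^ kk)%N = Rmult (INR a) (pow (INR b) kk).
  move=> a b kk; rewrite -multE mult_INR; congr Rmult.
  elim: kk => [|k IH] //=.
  by rewrite expnS -multE mult_INR IH.
case: (leqP (Nat.sub n 1) (num_nondet P q n)) => hk.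
- rewrite Nat.min_r; last by apply/leP.
  pose T1 (j l : 'I_n) := Qn (rho j) l.
  have dT1 : forall j, dsum T1 j = M.
    move=> j; apply/eqP; rewrite -(@eqr_nat R) /dsum natr_sum.
    rewrite (eq_bigr (fun l : 'I_n => M%:R * P (rho j) l)); last by move=> l _; rewrite /T1 hQn.
    by rewrite -mulr_sumr Psum mulr1.
  have eq1 : forall j, (dsum T1 j)%:R * (lam + v j) = (M%:R * IZR (c j)) + \sum_l (T1 j l)%:R * v l.
    move=> j; rewrite dT1 heq mulrDr; congr (_ + _); rewrite mulr_sumr.
    by apply: eq_bigr => l _; rewrite /T1 hQn mulrA.
  have dpos1 : forall j, (0 < dsum T1 j)%N by move=> j; rewrite dT1.
  have [y1 [[r0 ypos1] stat1 bnd1]] := key (Ordinal hn') dpos1.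
  have cs1 := chain_sum stat1 eq1.
  have [z hz] : exists z, \sum_(j : 'I_n) (y1 j)%:R * IZR (c j) = IZR z.
    by apply: sum_int => j; exists (Z.mul (Z.of_nat (y1 j)) (c j)); rewrite mult_IZR -natr_IZR.
  pose S1 := (\sum_j y1 j)%N.
  have hS1 : Rmult lam (INR S1) = IZR z.
    rewrite -hz INRE RmultE; apply: (mulfI MR).
    have e1 : \sum_i ((y1 i * dsum T1 i)%N%:R : R) = M%:R * (S1%:R).
      rewrite /S1 natr_sum mulr_sumr; apply: eq_bigr => j _; by rewrite dT1 natrM mulrC.
    have e2 : \sum_i (y1 i)%:R * (M%:R * IZR (c i)) = M%:R * \sum_(j : 'I_n) (y1 j)%:R * IZR (c j).
      rewrite mulr_sumr; apply: eq_bigr => j _; by rewrite mulrCA.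
    by rewrite -e2 -cs1 e1 mulrCA.
  have S1pos : (0 < S1)%N.
    by rewrite /S1 (bigD1 r0) //= ltn_addr.
  have S1le : (S1 <= n * M ^ (Nat.sub n 1))%N.
    have hy : forall r, (y1 r <= M ^ (Nat.sub n 1))%N.
      move=> r; apply: leq_trans (bnd1 r) _.
      rewrite (eq_bigr (fun _ => M)); last by move=> i _; rewrite dT1.
      apply: (@leq_trans (\prod_(i | i != r) M)).
        rewrite big_mkcond [X in (_ <= X)%N]big_mkcond; apply: leq_prod => i _.
        by case: (0 < y1 i)%N; case: (i != r).
      have -> : (\prod_(i | i != r) M = \prod_(i in predC1 r) M)%N by apply: eq_bigl.
      by rewrite prod_nat_const cardC1 card_ord -subn1.
    apply: (@leq_trans (\sum_(j < n) M ^ (Nat.sub n 1))%N); first by apply: leq_sum => j _; apply: hy.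
    by rewrite big_const_ord iter_addn_0 mulnC.
  apply: (final_bound hlam S1pos hS1); rewrite -INRpow; apply: le_INR; apply/leP; exact: S1le.
- rewrite Nat.min_l; last by apply/leP; apply: ltnW.
  set k := num_nondet P q n in hk *.
  pose NDn (r : nat) : bool := Nat.leb 2 (npos_row P n r).
  have det_row : forall r : 'I_q, ~~ NDn r -> forall l : 'I_n, P r l = 0 \/ P r l = 1.
    move=> r hnd l; case: (eqVneq (P r l) 0) => [->|pn]; first by left.
    right; have pp : 0 < P r l by rewrite lt0r pn Pnn.
    have others : forall l' : 'I_n, l' != l -> P r l' = 0.
      move=> l' ne; apply/eqP; apply: contraNT hnd => pn'.
      have pp' : 0 < P r l' by rewrite lt0r pn' Pnn.
      rewrite /NDn /npos_row length_filter_count seq_iota.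
      apply/Nat.leb_le; apply/leP.
      apply: (count2 (iota_uniq 0 n) (l := l) (l' := l')); rewrite ?mem_iota ?ltn_ord //.
      + by rewrite eq_sym.
      + by case: Rlt_dec => // h; exfalso; apply: h; apply/RltP.
      + by case: Rlt_dec => // h; exfalso; apply: h; apply/RltP.
    by rewrite -(Psum r) (bigD1 l) //= big1 ?addr0 // => l' /others.
  pose dd (r : 'I_q) : nat := if NDn r then M else 1%N.
  pose E (r : 'I_q) (l : 'I_n) : nat := if NDn r then Qn r l else (Qn r l %/ M)%N.
  have hE : forall r l, (E r l)%:R = (dd r)%:R * P r l.
    move=> r l; rewrite /E /dd; case: ifP => hnd; first exact: hQn.
    have := hQn r l; case: (det_row r (negbT hnd) l) => ->.
      by rewrite mulr0 => /eqP; rewrite pnatr_eq0 => /eqP ->; rewrite div0n mulr0.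
    rewrite mulr1 => /eqP; rewrite eqr_nat => /eqP ->; by rewrite divnn hM' mulr1.
  pose T2 (r s : 'I_q) : nat := (\sum_(l : 'I_n | rho l == s) E r l)%N.
  have part : forall (F : 'I_n -> R), \sum_(l : 'I_n) F l = \sum_(s : 'I_q) \sum_(l : 'I_n | rho l == s) F l.
    by move=> F; rewrite (partition_big rho xpredT) //.
  have partn : forall (F : 'I_n -> nat), (\sum_(l : 'I_n) F l = \sum_(s : 'I_q) \sum_(l : 'I_n | rho l == s) F l)%N.
    by move=> F; rewrite (partition_big rho xpredT) //.
  have dT2 : forall r, dsum T2 r = dd r.
    move=> r; apply/eqP; rewrite -(@eqr_nat R) /dsum /T2 -partn natr_sum.
    rewrite (eq_bigr (fun l : 'I_n => (dd r)%:R * P r l)); last by move=> l _; rewrite hE.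
    by rewrite -mulr_sumr Psum mulr1.
  pose u (r : 'I_q) := \sum_(l < n) P r l * v l.
  pose hh (r : 'I_q) := \sum_(l : 'I_n) (E r l)%:R * IZR (c l).
  have eq2 : forall r, (dsum T2 r)%:R * (lam + u r) = hh r + \sum_s (T2 r s)%:R * u s.
    move=> r.
    have e1 : (dsum T2 r)%:R * (lam + u r) = \sum_(l : 'I_n) (E r l)%:R * (lam + v l).
      have lamE : lam = \sum_(l < n) P r l * lam by rewrite -mulr_suml Psum mul1r.
      rewrite dT2 /u {1}lamE -big_split /= mulr_sumr.
      by apply: eq_bigr => l _; rewrite hE !mulrDr !mulrA.
    have e2 : \sum_s (T2 r s)%:R * u s = \sum_(l : 'I_n) (E r l)%:R * u (rho l).
      rewrite part; apply: eq_bigr => s _; rewrite /T2 natr_sum mulr_suml.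
      by apply: eq_bigr => l /eqP ->.
    rewrite e1 e2 /hh -big_split /=; apply: eq_bigr => l _.
    by rewrite heq mulrDr.
  have ddpos : forall r, (0 < dd r)%N by move=> r; rewrite /dd; case: ifP.
  have dpos2 : forall r, (0 < dsum T2 r)%N by move=> r; rewrite dT2.
  have [y2 [[r0 ypos2] stat2 bnd2]] := key (rho (Ordinal hn')) dpos2.
  have cs2 := chain_sum stat2 eq2.
  have [z hz] : exists z, \sum_(r : 'I_q) (y2 r)%:R * hh r = IZR z.
    apply: sum_int => r.
    have [z' hz'] : exists z', hh r = IZR z'.
      apply: sum_int => l; exists (Z.mul (Z.of_nat (E r l)) (c l)).
      by rewrite mult_IZR -natr_IZR.
    by exists (Z.mul (Z.of_nat (y2 r)) z'); rewrite hz' mult_IZR -natr_IZR.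
  pose S2 := (\sum_r y2 r * dsum T2 r)%N.
  have hS2 : Rmult lam (INR S2) = IZR z.
    by rewrite -hz -cs2 INRE RmultE /S2 natr_sum.
  have S2pos : (0 < S2)%N.
    by rewrite /S2 (bigD1 r0) //= ltn_addr // muln_gt0 ypos2 dpos2.
  have S2le : (S2 <= n * M ^ k)%N.
    have prodAll : (\prod_(i : 'I_q) dsum T2 i = M ^ k)%N.
      rewrite (eq_bigr (fun i : 'I_q => if NDn i then M else 1%N)); last by move=> i _; rewrite dT2.
      rewrite -(big_mkord xpredT (fun i => if NDn i then M else 1%N)) /index_iota subn0.
      by rewrite prod_count /k /num_nondet length_filter_count seq_iota.
    have term : forall r, (y2 r * dsum T2 r <= (0 < y2 r) * M ^ k)%N.
      move=> r; case: (posnP (y2 r)) => [->|yp] //.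
      rewrite mul1n -prodAll.
      apply: leq_trans (prod_cond_le (fun i => 0 < y2 i)%N dpos2).
      rewrite [X in (_ <= X)%N](bigD1 r) //= mulnC leq_mul2l; apply/orP; right.
      exact: bnd2.
    have cardD : (#|[pred r | 0 < y2 r]| <= n)%N.
      apply: (@leq_trans #|[set rho l | l : 'I_n]|); last first.
        by apply: leq_trans (leq_imset_card _ _) _; rewrite card_ord.
      apply: subset_leq_card; apply/subsetP => s; rewrite inE => ys.
      apply/imsetP; case: (boolP [exists l, rho l == s]) => [/existsP [l /eqP e]|hno].
        by exists l.
      exfalso.
      have T0 : forall i, T2 i s = 0%N.
        move=> i; apply: big1 => l hl; exfalso; move/negP: hno; apply.
        by apply/existsP; exists l.
      have := stat2 s; rewrite big1; last by move=> i _; rewrite T0 muln0.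
      move/esym/eqP; rewrite muln_eq0 => /orP [/eqP y0|/eqP d0].
        by rewrite y0 in ys.
      by have := dpos2 s; rewrite d0.
    apply: (@leq_trans (\sum_r (0 < y2 r) * M ^ k)%N); first by apply: leq_sum => r _; apply: term.
    rewrite -big_distrl /= leq_mul2r; apply/orP; right.
    apply: leq_trans cardD; rewrite -sum1_card [X in (_ <= X)%N]big_mkcond /=.
    by apply: leq_sum => i _; rewrite inE; case: (0 < y2 i)%N.
  apply: (final_bound hlam S2pos hS2); rewrite -INRpow; apply: le_INR; apply/leP; exact: S2le.
Qed.

End Aux.

Theorem mainTheorem9
  (m n q : nat) (A B : nat -> nat -> trop) (P : nat -> nat -> R)
  (Q : nat -> nat -> Z) (M : nat)
  (hn : (0 < n)%nat)
  (hA_col : forall j, (j < n)%nat -> exists i, (i < m)%nat /\ A i j <> None)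
  (hB_row : forall i, (i < m)%nat -> exists l, (l < q)%nat /\ B i l <> None)
  (hA_int : forall i j a, (i < m)%nat -> (j < n)%nat -> A i j = Some a ->
              exists z : Z, a = IZR z)
  (hB_int : forall i l b, (i < m)%nat -> (l < q)%nat -> B i l = Some b ->
              exists z : Z, b = IZR z)
  (hP : row_stochastic P q n)
  (hM : (0 < M)%nat)
  (hPQ : forall i l, (i < q)%nat -> (l < n)%nat -> P i l = IZR (Q i l) / INR M)
  (v : nat -> R) (lam : R)
  (hbias : is_bias A B P m n q v lam)
  (hlam : lam <> 0) :
  / Rabs lam <= INR n * INR M ^ (Nat.min (num_nondet P q n) (n - 1)).
Proof.
  exact (Aux.main_aux hn hA_int hB_int hP hM hPQ hbias hlam).
Qed.
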